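(* Let $\mathbf{A}\in\mathbb{R}^{m\times n}$ have all rows nonzero, let $b\in\mathcal{R}(\mathbf{A})$, and let $f:\mathbb{R}^n\to\mathbb{R}$ be finite everywhere and $1$-strongly convex, with $\hat x$ the unique solution of $\min_x f(x)$ subject to $\mathbf{A}x=b$. Fix a partition of the rows into $M$ blocks. Consider the block accelerated randomized Bregman–Kaczmarz method (ARBK): $z^0=y^0=0\in\mathbb{R}^m$, $\theta_0=1/M$, and for $k\ge0$: $v^k=(1-\theta_k)y^k+\theta_k z^k$; choose $i=i_k\in[M]$ uniformly at random, independently of the past; $$z^{k+1}=z^k-\frac{1}{M\theta_k}\,\frac{\mathbf{U}_i\big(\mathbf{A}_{(i)}\nabla f^*(\mathbf{A}^\top v^k)-b_{(i)}\big)}{\|\mathbf{A}_{(i)}\|_2^2},\quad y^{k+1}=v^k+M\theta_k(z^{k+1}-z^k),\quad \theta_{k+1}=\frac{\sqrt{\theta_k^4+4\theta_k^2}-\theta_k^2}{2},$$ and set $d^k=\mathbf{A}^\top y^k$, $x^k=\nabla f^*(d^k)$. Let $\hat y$ be any minimizer of $\Psi(y)=f^*(\mathbf{A}^\top y)-b^\top y$. Then for all $k\ge1$, $$\tfrac12\mathbb{E}\big[\|x^k-\hat x\|_2^2\big]\le\mathbb{E}\big[D_f^{d^k}(x^k,\hat x)\big]\le\frac{4M^2}{(k-1+2M)^2}\,C_0,$$ where $C_0=\big(1-\tfrac1M\big)D_f^{d^0}(x^0,\hat x)+\tfrac12\|y^0-\hat y\|_{\mathbf{B}}^2$.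
   Context: Block notation: $[m]$ is partitioned into $M$ consecutive blocks of sizes $m_1,\dots,m_M$; $\mathbf{I}_m=(\mathbf{U}_1,\dots,\mathbf{U}_M)$ with $\mathbf{U}_i\in\mathbb{R}^{m\times m_i}$, $\mathbf{A}_{(i)}=\mathbf{U}_i^\top\mathbf{A}$, $b_{(i)}=\mathbf{U}_i^\top b$, $y_{(i)}=\mathbf{U}_i^\top y$. $\|y\|_{\mathbf{B}}^2=\sum_{i=1}^M\|\mathbf{A}_{(i)}\|_2^2\,\|y_{(i)}\|_2^2$. $f^*$ is the Fenchel conjugate of $f$ (differentiable). For $x^*\in\partial f(x)$, $D_f^{x^*}(x,y)=f(y)-f(x)-\langle x^*,y-x\rangle$. Expectations are over the random block indices. *)

(* Defs.v *)
From HB Require Import structures.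
From mathcomp Require Import all_boot all_order all_algebra.
From mathcomp Require Import all_classical all_reals all_analysis.
Set Implicit Arguments. Unset Strict Implicit. Unset Printing Implicit Defensive.
Import Order.TTheory GRing.Theory Num.Theory.
Local Open Scope ring_scope.
Local Open Scope classical_set_scope.

Section ARBK.
Variable R : realType.

Definition dotv {n} (u v : 'cV[R]_n) : R := \sum_(j < n) u j 0 * v j 0.
Definition sqnorm2 {n} (v : 'cV[R]_n) : R := dotv v v.
Definition norm2 {n} (v : 'cV[R]_n) : R := Num.sqrt (sqnorm2 v).

Definition opnorm2 {m n} (B : 'M[R]_(m, n)) : R :=
  sup [set norm2 (B *m x) | x in [set x : 'cV[R]_n | norm2 x = 1]].

Definition strongly_convex1 {n} (f : 'cV[R]_n -> R) : Prop :=
  forall (x y : 'cV[R]_n) (t : R), 0 <= t <= 1 ->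
    f (t *: x + (1 - t) *: y) <=
      t * f x + (1 - t) * f y - t * (1 - t) / 2 * sqnorm2 (x - y).

Definition fconj {n} (f : 'cV[R]_n -> R) (d : 'cV[R]_n) : R :=
  sup [set dotv d x - f x | x in [set: 'cV[R]_n]].

Definition grad {n} (F : 'cV[R]_n -> R) (d : 'cV[R]_n) : 'cV[R]_n :=
  \col_(j < n) derive1 (fun t : R => F (d + t *: delta_mx j 0)) 0.

Definition bregman {n} (f : 'cV[R]_n -> R) (xs x y : 'cV[R]_n) : R :=
  f y - f x - dotv xs (y - x).

(* Block structure: blk r is the block of row r.  Consecutive blocks,
   all nonempty: blk is nondecreasing and surjective. *)
Definition consecutive_partition {m M} (blk : 'I_m -> 'I_M) : Prop :=
  (forall r s : 'I_m, (r <= s)%N -> (blk r <= blk s)%N) /\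
  (forall i : 'I_M, exists r : 'I_m, blk r = i).

(* U_i U_i^T A : the rows of block i, other rows zeroed *)
Definition blockA {m n M} (blk : 'I_m -> 'I_M) (A : 'M[R]_(m, n)) (i : 'I_M)
  : 'M[R]_(m, n) := \matrix_(r, j) (if blk r == i then A r j else 0).
(* U_i U_i^T y *)
Definition blockv {m M} (blk : 'I_m -> 'I_M) (y : 'cV[R]_m) (i : 'I_M)
  : 'cV[R]_m := \col_r (if blk r == i then y r 0 else 0).

(* ||A_(i)||_2 ; note ||U_i^T A||_2 = ||U_i U_i^T A||_2 *)
Definition blocknorm {m n M} (blk : 'I_m -> 'I_M) (A : 'M[R]_(m, n)) i : R :=
  opnorm2 (blockA blk A i).

Definition sqnormB {m n M} (blk : 'I_m -> 'I_M) (A : 'M[R]_(m, n))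
  (y : 'cV[R]_m) : R :=
  \sum_(i < M) blocknorm blk A i ^+ 2 * sqnorm2 (blockv blk y i).

Record state m := St { st_y : 'cV[R]_m; st_z : 'cV[R]_m; st_th : R }.

Definition arbk_step {m n M} (f : 'cV[R]_n -> R) (blk : 'I_m -> 'I_M)
  (A : 'M[R]_(m, n)) (b : 'cV[R]_m) (s : state m) (i : 'I_M) : state m :=
  let th := st_th s in
  let v := (1 - th) *: st_y s + th *: st_z s in
  let r := blockv blk (A *m grad (fconj f) (A^T *m v) - b) i in
  let z' := st_z s - ((M%:R * th)^-1 / blocknorm blk A i ^+ 2) *: r in
  let y' := v + (M%:R * th) *: (z' - st_z s) in
  St y' z' ((Num.sqrt (th ^+ 4 + 4 * th ^+ 2) - th ^+ 2) / 2).

Definition arbk_init m M : state m := St 0 0 (M%:R^-1).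

Definition arbk_state {m n M} f blk (A : 'M[R]_(m, n)) b (ix : seq 'I_M)
  : state m := foldl (arbk_step f blk A b) (arbk_init m M) ix.

(* Expectation over i_0, ..., i_{k-1} i.i.d. uniform on [M] *)
Definition expect_k (M k : nat) (X : seq 'I_M -> R) : R :=
  (M%:R ^+ k)^-1 * \sum_(t : k.-tuple 'I_M) X (val t).

End ARBK.

(* Main.v *)
Require Import Defs.
From HB Require Import structures.
From mathcomp Require Import all_boot all_order all_algebra.
From mathcomp Require Import all_classical all_reals all_analysis.
From mathcomp Require Import zify ring lra.
Import Order.TTheory GRing.Theory Num.Theory.
Set Implicit Arguments. Unset Strict Implicit. Unset Printing Implicit Defensive.
Local Open Scope ring_scope.

Section Basics.
Variable R : realType.
Implicit Types (n : nat).

Lemma dotvE n (u v : 'cV[R]_n) : dotv u v = (u^T *m v) 0 0.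
Proof. by rewrite /dotv !mxE; apply: eq_bigr => j _; rewrite mxE. Qed.

Lemma dotvC n (u v : 'cV[R]_n) : dotv u v = dotv v u.
Proof. by rewrite /dotv; apply: eq_bigr => j _; rewrite mulrC. Qed.

Lemma dotvDl n (u v w : 'cV[R]_n) : dotv (u + v) w = dotv u w + dotv v w.
Proof. by rewrite /dotv -big_split; apply: eq_bigr => j _; rewrite !mxE mulrDl. Qed.

Lemma dotvZl n a (u w : 'cV[R]_n) : dotv (a *: u) w = a * dotv u w.
Proof. by rewrite /dotv mulr_sumr; apply: eq_bigr => j _; rewrite !mxE mulrA. Qed.

Lemma dotvNl n (u w : 'cV[R]_n) : dotv (- u) w = - dotv u w.
Proof. by rewrite -scaleN1r dotvZl mulN1r. Qed.

Lemma dotvBl n (u v w : 'cV[R]_n) : dotv (u - v) w = dotv u w - dotv v w.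
Proof. by rewrite dotvDl dotvNl. Qed.

Lemma dotvDr n (u v w : 'cV[R]_n) : dotv w (u + v) = dotv w u + dotv w v.
Proof. by rewrite dotvC dotvDl !(dotvC w). Qed.
Lemma dotvZr n a (u w : 'cV[R]_n) : dotv w (a *: u) = a * dotv w u.
Proof. by rewrite dotvC dotvZl dotvC. Qed.
Lemma dotvNr n (u w : 'cV[R]_n) : dotv w (- u) = - dotv w u.
Proof. by rewrite dotvC dotvNl dotvC. Qed.
Lemma dotvBr n (u v w : 'cV[R]_n) : dotv w (u - v) = dotv w u - dotv w v.
Proof. by rewrite dotvDr dotvNr. Qed.
Lemma dotv0l n (w : 'cV[R]_n) : dotv 0 w = 0.
Proof. by rewrite /dotv big1 // => j _; rewrite mxE mul0r. Qed.
Lemma dotv0r n (w : 'cV[R]_n) : dotv w 0 = 0.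
Proof. by rewrite dotvC dotv0l. Qed.

Lemma dotv_mul m n (B : 'M[R]_(m, n)) h x : dotv (B^T *m h) x = dotv h (B *m x).
Proof. by rewrite !dotvE trmx_mul trmxK mulmxA. Qed.

Lemma sqnorm2_ge0 n (u : 'cV[R]_n) : 0 <= sqnorm2 u.
Proof. by rewrite /sqnorm2 /dotv sumr_ge0 // => j _; rewrite -expr2 sqr_ge0. Qed.

Lemma sqnorm2_eq0 n (u : 'cV[R]_n) : sqnorm2 u = 0 -> u = 0.
Proof.
move=> /eqP; rewrite /sqnorm2 /dotv psumr_eq0; last by move=> j _; rewrite -expr2 sqr_ge0.
move=> /allP H; apply/matrixP => i j; rewrite (ord1 j) mxE.
have := H i (mem_index_enum _); rewrite implyTb -expr2 sqrf_eq0 => /eqP //.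
Qed.

Lemma sqnorm2D n (u v : 'cV[R]_n) :
  sqnorm2 (u + v) = sqnorm2 u + 2 * dotv u v + sqnorm2 v.
Proof. rewrite /sqnorm2 !dotvDl !dotvDr (dotvC v u); ring. Qed.
Lemma sqnorm2B n (u v : 'cV[R]_n) :
  sqnorm2 (u - v) = sqnorm2 u - 2 * dotv u v + sqnorm2 v.
Proof. rewrite /sqnorm2 !dotvDl !dotvDr !dotvNl !dotvNr (dotvC v u); ring. Qed.
Lemma sqnorm2Z n a (u : 'cV[R]_n) : sqnorm2 (a *: u) = a ^+ 2 * sqnorm2 u.
Proof. rewrite /sqnorm2 dotvZl dotvZr; ring. Qed.
Lemma sqnorm2N n (u : 'cV[R]_n) : sqnorm2 (- u) = sqnorm2 u.
Proof. by rewrite /sqnorm2 dotvNl dotvNr opprK. Qed.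

Lemma dotv_le n (u v : 'cV[R]_n) : 2 * dotv u v <= sqnorm2 u + sqnorm2 v.
Proof. have := sqnorm2_ge0 (u - v); rewrite sqnorm2B; lra. Qed.

Lemma coord_le n (u : 'cV[R]_n) j : u j 0 ^+ 2 <= sqnorm2 u.
Proof.
rewrite /sqnorm2 /dotv (bigD1 j) //= expr2 lerDl sumr_ge0 // => i _.
by rewrite -expr2 sqr_ge0.
Qed.

End Basics.

Section Conv.
Variables (R : realType) (n : nat) (f : 'cV[R]_n -> R).
Hypothesis hsc : strongly_convex1 f.

Lemma convf x y t : 0 <= t <= 1 -> f (t *: x + (1 - t) *: y) <= t * f x + (1 - t) * f y.
Proof.
move=> ht; apply: le_trans (hsc x y ht) _; case/andP: ht => t0 t1.
have : 0 <= t * (1 - t) / 2 * sqnorm2 (x - y).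
  by rewrite !mulr_ge0 ?sqnorm2_ge0 ?invr_ge0 ?subr_ge0.
lra.
Qed.

Lemma box_bound_k k : forall p, exists U, forall w : 'cV[R]_n,
  (forall j, `|w j 0| <= 1) -> (forall j : 'I_n, (k <= j)%N -> w j 0 = 0) ->
  f (p + w) <= U.
Proof.
elim: k => [|k IH] p.
  exists (f p) => w _ hw.
  have -> : w = 0 by apply/matrixP => i j; rewrite (ord1 j) mxE hw.
  by rewrite addr0.
case: (ltnP k n) => kn; last first.
  have [U HU] := IH p; exists U => w h1 h2; apply: HU => // j kj.
  by have := ltn_ord j; lia.
pose j0 := Ordinal kn.
pose e : 'cV[R]_n := delta_mx j0 0.
have [U1 H1] := IH (p + e); have [U2 H2] := IH (p - e).
exists (Num.max U1 U2) => w hb hs.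
pose t := w j0 0.
pose w' := w - t *: e.
have w'E j : w' j 0 = if j == j0 then 0 else w j 0.
  rewrite !mxE eqxx andbT; case: eqP => [->|_] /=; rewrite ?mulr1 ?mulr0 ?subr0 //.
  by rewrite subrr.
have w'b j : `|w' j 0| <= 1 by rewrite w'E; case: eqP => _ //; rewrite normr0.
have w's (j : 'I_n) : (k <= j)%N -> w' j 0 = 0.
  rewrite w'E; case: eqP => // /eqP hj kj; apply: hs.
  have : (j : nat) != k by apply: contra hj => /eqP hj'; apply/eqP/val_inj.
  lia.
have ht : `|t| <= 1 := hb j0.
move: ht; rewrite ler_norml => /andP [ta tb].
pose lam := (1 + t) / 2.
have -> : p + w = lam *: (p + e + w') + (1 - lam) *: (p - e + w').
  have E (a b c u : R) : a + b = (1 + u) / 2 * (a + c + (b - u * c)) +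
     (1 - (1 + u) / 2) * (a - c + (b - u * c)) by field.
  by apply/matrixP => i j; rewrite !mxE /lam; apply: E.
have lam01 : 0 <= lam <= 1 by rewrite /lam; apply/andP; split; lra.
apply: le_trans (convf _ _ lam01) _.
have := H1 w' w'b w's; have := H2 w' w'b w's.
have : U1 <= Num.max U1 U2 by rewrite le_max lexx.
have : U2 <= Num.max U1 U2 by rewrite le_max lexx orbT.
set V := Num.max U1 U2 => hV2 hV1 hf2 hf1.
have : lam * f (p + e + w') <= lam * V.
  by apply: ler_wpM2l; [lra|lra].
have : (1 - lam) * f (p - e + w') <= (1 - lam) * V.
  by apply: ler_wpM2l; [lra|lra].
lra.
Qed.

Definition inbox (s : R) (w : 'cV[R]_n) := forall j, `|w j 0| <= s.

Lemma box_bound p : exists U, forall w, inbox 1 w -> f (p + w) <= U.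
Proof.
have [U HU] := box_bound_k n p; exists U => w hw; apply: HU => // j hj.
by have := ltn_ord j; lia.
Qed.

Lemma box_lower p : exists L, forall w, inbox 1 w -> L <= f (p + w).
Proof.
have [U HU] := box_bound p; exists (2 * f p - U) => w hw.
have h01 : 0 <= (2^-1 : R) <= 1 by apply/andP; split; lra.
have := convf (p + w) (p - w) h01.
have -> : 2^-1 *: (p + w) + (1 - 2^-1) *: (p - w) = p.
  by apply/matrixP => i j; rewrite !mxE; field.
have : f (p + - w) <= U by apply: HU => j; rewrite mxE normrN.
lra.
Qed.

Lemma dotv_box (d h : 'cV[R]_n) s : inbox s h ->
  dotv d h <= (\sum_j `|d j 0|) * s.
Proof.
move=> hh; rewrite /dotv mulr_suml; apply: ler_sum => j _.
apply: le_trans (ler_norm _) _; rewrite normrM; apply: ler_wpM2l => //.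
Qed.

End Conv.

Section Conv2.
Variables (R : realType) (n : nat) (f : 'cV[R]_n -> R).
Hypothesis hsc : strongly_convex1 f.

Definition gd (d x : 'cV[R]_n) := dotv d x - f x.

Lemma g_sconc d x y t : 0 <= t <= 1 ->
  t * gd d x + (1 - t) * gd d y + t * (1 - t) / 2 * sqnorm2 (x - y)
  <= gd d (t *: x + (1 - t) *: y).
Proof.
move=> ht; have := hsc x y ht; rewrite /gd dotvDr !dotvZr; lra.
Qed.

Lemma sqnorm2_sum (x : 'cV[R]_n) : sqnorm2 x = \sum_j x j 0 ^+ 2.
Proof. by rewrite /sqnorm2 /dotv; apply: eq_bigr => j _; rewrite expr2. Qed.

Lemma g_bdd d : exists K, forall x, gd d x <= K.
Proof.
have [L0 HL] := box_lower hsc 0.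
pose D := \sum_j `|d j 0|.
have D0 : 0 <= D by rewrite sumr_ge0.
pose G := D - L0.
have gbox w : inbox 1 w -> gd d w <= G.
  move=> hw; have := dotv_box d hw; have := HL w hw; rewrite add0r /gd /G -/D; lra.
pose g0 := gd d 0.
pose C := `|G - g0|.
exists (n%:R * C ^+ 2 + 2 * C + g0) => x.
pose a := \sum_j `|x j 0| + 2.
have S0 : 0 <= \sum_j `|x j 0| by rewrite sumr_ge0.
have a2 : 2 <= a by rewrite /a; lra.
have a0 : 0 < a by lra.
pose t := a^-1.
have ta : t * a = 1 by rewrite /t mulVf // gt_eqF.
have t0 : 0 < t by rewrite /t invr_gt0.
have t12 : t <= 2^-1.
  by rewrite /t lef_pV2 ?posrE //; lra.
have ht : 0 <= t <= 1 by apply/andP; split; lra.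
have := g_sconc d x 0 ht.
rewrite scaler0 addr0 subr0.
have hw : inbox 1 (t *: x).
  move=> j; rewrite mxE normrM gtr0_norm // /t ler_pdivrMl // mulr1.
  rewrite /a (bigD1 j) //=; have : 0 <= \sum_(i | i != j) `|x i 0| by rewrite sumr_ge0.
  lra.
have := gbox _ hw.
have N0 := sqnorm2_ge0 x.
set N := sqnorm2 x; set gx := gd d x => h1 h2.
rewrite -/g0 in h2.
have h3 : gx + (a - 1) * g0 + (1 - t) / 2 * N <= a * G.
  have : a * (t * gx + (1 - t) * g0 + t * (1 - t) / 2 * N) <= a * G.
    by apply: ler_wpM2l; lra.
  have -> : a * (t * gx + (1 - t) * g0 + t * (1 - t) / 2 * N) =
     (t * a) * gx + (a - t * a) * g0 + (t * a) * (1 - t) / 2 * N by ring.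
  by rewrite ta; rewrite !mul1r.
have h4 : a * (G - g0) <= a * C by apply: ler_wpM2l; [lra | exact: ler_norm].
have h5 : (1 - t) / 2 * N >= N / 4.
  have : 0 <= (2^-1 - t) / 2 * N by rewrite !mulr_ge0 //; lra.
  have -> : (1 - t) / 2 * N = (2^-1 - t) / 2 * N + N / 4 by field.
  lra.
have C0 : 0 <= C by rewrite /C normr_ge0.
have h6 : (\sum_j `|x j 0|) * C <= n%:R * C ^+ 2 + N / 4.
  rewrite mulr_suml /N sqnorm2_sum.
  have -> : n%:R * C ^+ 2 = \sum_(j < n) C ^+ 2.
    by rewrite sumr_const card_ord mulr_natl.
  rewrite mulr_suml -big_split /=; apply: ler_sum => j _.
  have := real_normK (num_real (x j 0)).
  have := sqr_ge0 (`|x j 0| - 2 * C).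
  nra.
have h7 : a * C = (\sum_j `|x j 0|) * C + 2 * C by rewrite /a; ring.
lra.
Qed.

Definition gset (d : 'cV[R]_n) := [set dotv d x - f x | x in [set: 'cV[R]_n]]%classic.

Lemma has_sup_g d : has_sup (gset d).
Proof.
have [K HK] := g_bdd d; split; first by exists (dotv d 0 - f 0); exists 0.
by exists K => _ [x _ <-]; apply: HK.
Qed.

Lemma fconj_ge d x : dotv d x - f x <= fconj f d.
Proof. by apply: (sup_upper_bound (has_sup_g d)); exists x. Qed.

Lemma fconj_le d K : (forall x, dotv d x - f x <= K) -> fconj f d <= K.
Proof.
move=> H; apply: ge_sup; first by exists (dotv d 0 - f 0); exists 0.
by move=> _ [x _ <-]; apply: H.
Qed.

Lemma fconj_approx d e : 0 < e -> exists x, fconj f d - e < gd d x.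
Proof. by move=> e0; have [_ [x _ <-] H] := sup_adherent e0 (has_sup_g d); exists x. Qed.

Lemma key_approx d u e x t : 0 <= e -> fconj f d - e <= gd d u -> 0 < t <= 1 ->
  dotv d x - fconj f d + (1 - t) / 2 * sqnorm2 (x - u) - e / t <= f x.
Proof.
move=> e0 hu /andP [t0 t1].
have ht : 0 <= t <= 1 by apply/andP; split; lra.
have hs := g_sconc d x u ht.
have hG : gd d (t *: x + (1 - t) *: u) <= fconj f d := fconj_ge d _.
have N0 := sqnorm2_ge0 (x - u).
move: hs hG hu; set N := sqnorm2 (x - u); set S := fconj f d.
set G := gd _ (_ + _); set gx := gd d x; set gu := gd d u => hs hG hu.
have h1 : (1 - t) * (S - e) <= (1 - t) * gu by apply: ler_wpM2l; lra.
have h2 : t * gx <= t * (S + e / t - (1 - t) / 2 * N).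
  have -> : t * (S + e / t - (1 - t) / 2 * N) = t * S + e - t * (1 - t) / 2 * N.
    by field; rewrite gt_eqF.
  have : 0 <= t * e by rewrite mulr_ge0 //; lra.
  lra.
have h3 : gx <= S + e / t - (1 - t) / 2 * N by rewrite -(ler_pM2l t0).
rewrite /gx /gd in h3; lra.
Qed.

Lemma mid_cauchy d u v e1 e2 : fconj f d - e1 <= gd d u -> fconj f d - e2 <= gd d v ->
  sqnorm2 (u - v) <= 4 * (e1 + e2).
Proof.
move=> hu hv.
have ht : 0 <= (2^-1 : R) <= 1 by apply/andP; split; lra.
have := g_sconc d u v ht.
have := fconj_ge d (2^-1 *: u + (1 - 2^-1) *: v).
rewrite -/(gd _ _) => h1 h2.
have : 2^-1 * (1 - 2^-1) / 2 * sqnorm2 (u - v) = sqnorm2 (u - v) / 8 by field.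
lra.
Qed.

Lemma limit_t (a b c : R) : 0 <= c -> (forall t, 0 < t <= 1 -> a + (1 - t) * c <= b) -> a + c <= b.
Proof.
move=> c0 H; rewrite leNgt; apply/negP => hlt.
pose dl := a + c - b.
have dl0 : 0 < dl by rewrite /dl; lra.
have dc : 0 < dl + c by lra.
pose t := dl / (dl + c).
have tE : t * (dl + c) = dl by rewrite /t mulfVK // gt_eqF.
have t0 : 0 < t by rewrite /t divr_gt0.
have t1 : t <= 1 by rewrite /t ler_pdivrMr // mul1r; lra.
have := H t (introT andP (conj t0 t1)) => h.
have h2 : (dl + c) * ((1 - t) * c) <= (dl + c) * (c - dl).
  by apply: ler_wpM2l; rewrite /dl; lra.
have h3 : (dl + c) * ((1 - t) * c) = c * c.
  have -> : (dl + c) * ((1 - t) * c) = (dl + c) * c - (t * (dl + c)) * c by ring.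
  rewrite tE; ring.
have h4 : 0 < dl * dl by rewrite mulr_gt0.
have h5 : (dl + c) * (c - dl) = c * c - dl * dl by ring.
lra.
Qed.

End Conv2.

Section Conv3.
Variables (R : realType) (n : nat) (f : 'cV[R]_n -> R).
Hypothesis hsc : strongly_convex1 f.

Lemma sq_le_abs (a c : R) : a ^+ 2 <= c ^+ 2 -> 0 <= c -> `|a| <= c.
Proof.
move=> h c0; rewrite -ler_sqr ?nnegrE ?normr_ge0 //.
by rewrite real_normK // num_real.
Qed.

Lemma archi_le0 (x C : R) : (forall l, (1 <= l)%N -> x <= C * (l.+1%:R)^-1) -> x <= 0.
Proof.
move=> H; rewrite leNgt; apply/negP => x0.
have C0 : 0 < C.
  have := H 1%N isT; rewrite leNgt => h; rewrite ltNge; apply/negP => hC.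
  move/negP: h; apply; apply: le_lt_trans x0.
  by rewrite mulr_le0_ge0 // invr_ge0.
pose l := (Num.bound (C / x)).
have hl : C / x < l%:R by apply: archi_boundP; rewrite divr_ge0 // ltW.
have := H l.+1 isT.
have hl2 : C < x * l.+2%:R.
  rewrite ltr_pdivrMr // in hl; apply: lt_le_trans hl _.
  by rewrite mulrC ler_pM2l // ler_nat; lia.
rewrite ler_pdivlMr ?ltr0Sn //; lra.
Qed.

Lemma exists_max d : exists X, gd f d X = fconj f d.
Proof.
set S := fconj f d.
pose ai (k : nat) : R := (k.+1%:R)^-1.
have ai0 k : 0 < ai k by rewrite invr_gt0 ltr0Sn.
pose ep (k : nat) : R := ai k ^+ 2.
pose e (k : nat) : R := 2 * ai k.
have ep0 k : 0 < ep k by rewrite /ep exprn_gt0.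
have [u hu] : {u : nat -> 'cV[R]_n & forall k, S - ep k < gd f d (u k)}.
  by apply: (@choice _ _ (fun k y => S - ep k < gd f d y)) => k; exact: fconj_approx.
have cu k l j : `|u k j 0 - u l j 0| <= e k + e l.
  have h := mid_cauchy hsc (ltW (hu k)) (ltW (hu l)).
  have hc := coord_le (u k - u l) j; rewrite !mxE in hc.
  apply: sq_le_abs; last by rewrite /e; have := ai0 k; have := ai0 l; lra.
  apply: le_trans hc _; apply: le_trans h _.
  rewrite /ep /e; have := ai0 k; have := ai0 l.
  set p := ai k; set q := ai l => q0 p0.
  have : 0 <= p * q by rewrite mulr_ge0 // ltW.
  have -> : (2 * p + 2 * q) ^+ 2 = 4 * (p ^+ 2 + q ^+ 2) + 8 * (p * q) by ring.
  lra.
pose X : 'cV[R]_n := \col_j sup [set u k j 0 - e k | k in [set: nat]]%classic.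
have hsX (j : 'I_n) : has_sup [set u k j 0 - e k | k in [set: nat]]%classic.
  split; first by exists (u 0%N j 0 - e 0%N); exists 0%N.
  exists (u 0%N j 0 + e 0%N) => _ [k _ <-].
  by have := cu k 0%N j; rewrite ler_norml => /andP [_ h]; lra.
have Xl l j : `|X j 0 - u l j 0| <= e l.
  rewrite mxE ler_norml; apply/andP; split.
    have : u l j 0 - e l <= sup [set u k j 0 - e k | k in [set: nat]]%classic.
      by apply: (sup_upper_bound (hsX j)); exists l.
    lra.
  have : sup [set u k j 0 - e k | k in [set: nat]]%classic <= u l j 0 + e l.
    apply: ge_sup; first by exists (u 0%N j 0 - e 0%N); exists 0%N.
    move=> _ [k _ <-].
    by have := cu k l j; rewrite ler_norml => /andP [_ h]; lra.
  lra.
have [U HU] := box_bound hsc X.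
pose D := \sum_j `|d j 0|.
have D0 : 0 <= D by rewrite sumr_ge0.
exists X; apply/eqP; rewrite eq_le; apply/andP; split; first exact: fconj_ge.
suff : f X - dotv d X + S <= 0 by rewrite /gd; lra.
apply: (@archi_le0 _ (1 + 2 * D + 2 * `|U| + 2 * `|f X|)) => l l1.
have al0 := ai0 l.
set al := ai l in al0 *.
have al12 : al <= 2^-1.
  by rewrite /al /ai lef_pV2 ?posrE ?ltr0Sn // ler_nat; lia.
pose s := 2 * al.
have s0 : 0 < s by rewrite /s; lra.
pose h := X - u l.
have hb : inbox s h by move=> j; rewrite /h [in X in `|X|]mxE [in X in `|_ + X|]mxE; exact: Xl.
have st1 : f X <= 2^-1 * f (u l) + (1 - 2^-1) * f (X + h).
  have h01 : 0 <= (2^-1 : R) <= 1 by apply/andP; split; lra.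
  have := convf hsc (u l) (X + h) h01.
  suff -> : 2^-1 *: u l + (1 - 2^-1) *: (X + h) = X by [].
  by apply/matrixP => i j; rewrite !mxE; field.
have st2 : f (X + h) <= s * f (X + s^-1 *: h) + (1 - s) * f X.
  have h01 : 0 <= s <= 1 by apply/andP; split; rewrite /s; lra.
  have := convf hsc (X + s^-1 *: h) X h01.
  suff -> : s *: (X + s^-1 *: h) + (1 - s) *: X = X + h by [].
  by apply/matrixP => i j; rewrite !mxE; field; rewrite gt_eqF.
have st3 : f (X + s^-1 *: h) <= U.
  apply: HU => j; rewrite mxE normrM gtr0_norm ?invr_gt0 //.
  by rewrite ler_pdivrMl // mulr1; exact: hb.
have st4 := hu l; rewrite /gd in st4.
have st5 : dotv d (u l) = dotv d X - dotv d h.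
  by rewrite -dotvBr /h opprB addrC subrK.
have st6 : - dotv d h <= D * s.
  rewrite -dotvNr; apply: dotv_box => j; rewrite mxE normrN; exact: hb.
have st7 : ep l <= al by rewrite /ep -/al expr2 ger_pMl //; lra.
have st8 : s * f (X + s^-1 *: h) <= s * `|U|.
  by apply: ler_wpM2l; [lra | apply: le_trans st3 (ler_norm _)].
have st9 : - (s * f X) <= s * `|f X|.
  by rewrite -mulrN; apply: ler_wpM2l; [lra | rewrite -normrN ler_norm].
rewrite /s in st8 st9 st6 st2.
change (f X - dotv d X + S <= (1 + 2 * D + 2 * `|U| + 2 * `|f X|) * al).
lra.
Qed.

Lemma max_C4 d X : gd f d X = fconj f d ->
  forall x, f X + dotv d (x - X) + 2^-1 * sqnorm2 (x - X) <= f x.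
Proof.
move=> hX x.
have N0 := sqnorm2_ge0 (x - X).
have c0 : 0 <= 2^-1 * sqnorm2 (x - X) by rewrite mulr_ge0 // invr_ge0; lra.
have hu : fconj f d - 0 <= gd f d X by rewrite hX subr0.
have h : dotv d x - fconj f d + 2^-1 * sqnorm2 (x - X) <= f x.
  apply: (@limit_t _ (dotv d x - fconj f d) (f x) (2^-1 * sqnorm2 (x - X)) c0) => t ht.
  have := key_approx hsc x (lexx 0) hu ht.
  rewrite mul0r subr0.
  suff -> : (1 - t) * (2^-1 * sqnorm2 (x - X)) = (1 - t) / 2 * sqnorm2 (x - X) by [].
  by ring.
rewrite dotvBr; move: hX h; rewrite /gd; lra.
Qed.

End Conv3.

Section Deriv.
Variable R : realType.
Lemma derive1_sandwich (F : R -> R) c :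
  (forall h, h != 0 -> `|h^-1 * (F h - F 0) - c| <= `|h|) -> derive1 F 0 = c.
Proof.
move=> H; rewrite /derive1; apply: cvg_lim => //.
apply/cvgrPdist_le => e e0.
near=> h.
have hn0 : h != 0 by near: h; apply: withinT.
rewrite addr0 distrC; apply: le_trans (H _ hn0) _.
by near: h; exact: dnbhs0_le.
Unshelve. all: by end_near.
Qed.

Lemma dotv_delta n (j : 'I_n) (X : 'cV[R]_n) : dotv (delta_mx j 0) X = X j 0.
Proof.
rewrite /dotv (bigD1 j) //= big1 => [|i ij]; first by rewrite !mxE !eqxx mul1r addr0.
by rewrite !mxE (negbTE ij) mul0r.
Qed.

Lemma sqnorm2_delta n (j : 'I_n) : sqnorm2 (delta_mx j 0 : 'cV[R]_n) = 1.
Proof. by rewrite /sqnorm2 dotv_delta mxE !eqxx. Qed.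
End Deriv.

Section Conv4.
Variables (R : realType) (n : nat) (f : 'cV[R]_n -> R).
Hypothesis hsc : strongly_convex1 f.

Lemma C1C2 d X : gd f d X = fconj f d ->
  (forall d', fconj f d + dotv (d' - d) X <= fconj f d') /\
  (forall d', fconj f d' <= fconj f d + dotv (d' - d) X + 2^-1 * sqnorm2 (d' - d)).
Proof.
move=> hX; split => d'.
  have := fconj_ge hsc d' X; rewrite -hX /gd dotvBl; lra.
apply: fconj_le => x.
have h4 := max_C4 hsc hX x.
have h5 := dotv_le (d' - d) (x - X).
have e1 : dotv d' x = dotv d x + dotv (d' - d) x by rewrite dotvBl; ring.
have e2 : dotv (d' - d) x = dotv (d' - d) X + dotv (d' - d) (x - X) by rewrite dotvBr; ring.
have e3 : dotv d (x - X) = dotv d x - dotv d X by rewrite dotvBr.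
move: hX; rewrite /gd => hX.
lra.
Qed.

Lemma conj_props d : let X := grad (fconj f) d in
  gd f d X = fconj f d /\
  (forall x, f X + dotv d (x - X) + 2^-1 * sqnorm2 (x - X) <= f x) /\
  (forall d', fconj f d + dotv (d' - d) X <= fconj f d') /\
  (forall d', fconj f d' <= fconj f d + dotv (d' - d) X + 2^-1 * sqnorm2 (d' - d)).
Proof.
have [X0 hX0] := exists_max hsc d.
have [c1 c2] := C1C2 hX0.
suff -> : grad (fconj f) d = X0 by split => //; split => //; exact: max_C4.
apply/matrixP => j i; rewrite (ord1 i) mxE.
apply: derive1_sandwich => h hn0.
rewrite scale0r addr0.
have ed : d + h *: delta_mx j 0 - d = h *: delta_mx j 0 by rewrite addrC addKr.
have h1 := c1 (d + h *: delta_mx j 0); have h2 := c2 (d + h *: delta_mx j 0).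
rewrite ed dotvZl dotv_delta in h1 h2; rewrite sqnorm2Z sqnorm2_delta mulr1 in h2.
set F := fconj f (d + h *: delta_mx j 0) in h1 h2 *.
set S := fconj f d in h1 h2 *.
set r := F - S - h * X0 j 0.
have r0 : 0 <= r by rewrite /r; lra.
have hh : 0 < `|h| by rewrite normr_gt0.
have rh : r <= `|h| * `|h|.
  have : 0 <= h ^+ 2 by exact: sqr_ge0.
  rewrite -normrM -expr2 -[`|_|]ger0_norm ?sqr_ge0 // normrX ger0_norm ?normr_ge0 //.
  rewrite real_normK ?num_real //; rewrite /r; lra.
have -> : h^-1 * (F - S) - X0 j 0 = h^-1 * r by rewrite /r; field.
rewrite normrM normrV ?unitfE // (ger0_norm r0) mulrC ler_pdivrMr //.
Qed.

End Conv4.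

Section OpNorm.
Variable R : realType.

Lemma norm2_sq n (x : 'cV[R]_n) : norm2 x ^+ 2 = sqnorm2 x.
Proof. by rewrite /norm2 sqr_sqrtr // sqnorm2_ge0. Qed.

Lemma norm2_ge0 n (x : 'cV[R]_n) : 0 <= norm2 x.
Proof. exact: sqrtr_ge0. Qed.

Lemma sum_sq_le p (c : 'I_p -> R) : (forall r, 0 <= c r) ->
  \sum_r c r ^+ 2 <= (\sum_r c r) ^+ 2.
Proof.
move=> c0; rewrite expr2 mulr_suml; apply: ler_sum => r _.
rewrite expr2; apply: ler_wpM2l => //.
by rewrite (bigD1 r) //= lerDl sumr_ge0.
Qed.

Lemma opset_ub p q (B : 'M[R]_(p, q)) x : norm2 x = 1 ->
  norm2 (B *m x) <= \sum_r \sum_j `|B r j|.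
Proof.
move=> hx.
have sx : sqnorm2 x = 1 by rewrite -norm2_sq hx expr1n.
have xj j : `|x j 0| <= 1.
  by apply: sq_le_abs => //; rewrite expr1n -sx; exact: coord_le.
have K0 : 0 <= \sum_r \sum_j `|B r j| by rewrite sumr_ge0 // => r _; rewrite sumr_ge0.
rewrite /norm2 -(ger0_norm K0) -sqrtr_sqr ler_sqrt ?sqr_ge0 //.
apply: le_trans (sum_sq_le _) => [|r]; last by rewrite sumr_ge0.
rewrite sqnorm2_sum; apply: ler_sum => r _.
have h : `|(B *m x) r 0| <= \sum_j `|B r j|.
  rewrite mxE; apply: le_trans (ler_norm_sum _ _ _) _; apply: ler_sum => j _.
  by rewrite normrM; apply: ler_piMr => //.
have := real_normK (num_real ((B *m x) r 0)).
have := normr_ge0 ((B *m x) r 0).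
nra.
Qed.

Definition opset p q (B : 'M[R]_(p, q)) :=
  [set norm2 (B *m x) | x in [set x : 'cV[R]_q | norm2 x = 1]]%classic.

Lemma opnorm_ge p q (B : 'M[R]_(p, q)) x : norm2 x = 1 -> norm2 (B *m x) <= opnorm2 B.
Proof.
move=> hx; apply: (sup_upper_bound (E := opset B)); last by exists x.
split; first by exists (norm2 (B *m x)); exists x.
by exists (\sum_r \sum_j `|B r j|) => _ [y hy <-]; apply: opset_ub.
Qed.

Lemma opnorm_bound p q (B : 'M[R]_(p, q)) x :
  sqnorm2 (B *m x) <= opnorm2 B ^+ 2 * sqnorm2 x.
Proof.
have [x0|xn0] := eqVneq (sqnorm2 x) 0.
  have -> : x = 0 by exact: sqnorm2_eq0.
  by rewrite mulmx0 /sqnorm2 !dotv0l mulr0.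
have sp : 0 < sqnorm2 x by rewrite lt_def xn0 sqnorm2_ge0.
set s := norm2 x.
have s0 : 0 < s by rewrite /s /norm2 sqrtr_gt0.
have ss : sqnorm2 x = s ^+ 2 by rewrite norm2_sq.
pose x' := s^-1 *: x.
have hx' : norm2 x' = 1.
  rewrite /norm2 /x' sqnorm2Z ss exprVn mulVf ?sqrtr1 //.
  by rewrite expf_neq0 // gt_eqF.
have h := opnorm_ge B hx'.
have h0 := norm2_ge0 (B *m x').
have h2 : norm2 (B *m x') ^+ 2 <= opnorm2 B ^+ 2.
  by rewrite ler_sqr ?nnegrE ?(le_trans h0 h).
rewrite norm2_sq /x' -scalemxAr sqnorm2Z in h2.
rewrite ss; rewrite exprVn in h2.
have s2 : 0 < s ^+ 2 by rewrite exprn_gt0.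
rewrite -ler_pdivrMr //; rewrite mulrC; exact: h2.
Qed.

Lemma opnorm_tr p q (B : 'M[R]_(p, q)) w :
  sqnorm2 (B^T *m w) <= opnorm2 B ^+ 2 * sqnorm2 w.
Proof.
set pp := B^T *m w; set N2 := opnorm2 B ^+ 2.
have hp : sqnorm2 pp = dotv w (B *m pp) by rewrite /sqnorm2 {1}/pp dotv_mul.
have hB : sqnorm2 (B *m pp) <= N2 * sqnorm2 pp := opnorm_bound B pp.
have N0 : 0 <= N2 by rewrite /N2 sqr_ge0.
have [Ne|Nn] := eqVneq N2 0.
  rewrite Ne mul0r in hB.
  have : sqnorm2 (B *m pp) = 0 by apply/eqP; rewrite eq_le hB sqnorm2_ge0.
  move/sqnorm2_eq0 => e; rewrite hp e dotv0r Ne mul0r lexx //.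
have Np : 0 < N2 by rewrite lt_def Nn N0.
have h := dotv_le (N2 *: w) (B *m pp).
rewrite dotvZl sqnorm2Z -hp in h.
have : N2 * sqnorm2 pp <= N2 * (N2 * sqnorm2 w).
  have -> : N2 * (N2 * sqnorm2 w) = N2 ^+ 2 * sqnorm2 w by rewrite expr2 mulrA.
  lra.
by rewrite ler_pM2l.
Qed.

End OpNorm.

Section Blocks.
Variables (R : realType) (m n M : nat) (blk : 'I_m -> 'I_M) (A : 'M[R]_(m, n)).

Lemma blockvE (y : 'cV[R]_m) i r : blockv blk y i r 0 = if blk r == i then y r 0 else 0.
Proof. by rewrite mxE. Qed.

Lemma blockv_sum (y : 'cV[R]_m) : \sum_i blockv blk y i = y.
Proof.
apply/matrixP => r c; rewrite (ord1 c) summxE (bigD1 (blk r)) //= big1.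
  by rewrite blockvE eqxx addr0.
by move=> i hi; rewrite blockvE eq_sym (negbTE hi).
Qed.

Lemma dotv_blockv (u w : 'cV[R]_m) i : dotv (blockv blk u i) w = dotv u (blockv blk w i).
Proof. by rewrite /dotv; apply: eq_bigr => r _; rewrite !blockvE; case: ifP; rewrite ?mul0r ?mulr0. Qed.

Lemma blockv_idem (w : 'cV[R]_m) i : blockv blk (blockv blk w i) i = blockv blk w i.
Proof. by apply/matrixP => r c; rewrite (ord1 c) !blockvE; case: (blk r == i). Qed.

Lemma blockv_ne (w : 'cV[R]_m) i j : i != j -> blockv blk (blockv blk w i) j = 0.
Proof.
move=> ij; apply/matrixP => r c; rewrite (ord1 c) !blockvE mxE.
case: eqP => // ->; by rewrite eq_sym (negbTE ij).
Qed.

Lemma blockv_lin (u w : 'cV[R]_m) c j :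
  blockv blk (u - c *: w) j = blockv blk u j - c *: blockv blk w j.
Proof.
apply/matrixP => r k; rewrite (ord1 k) !mxE; case: ifP => _ //.
by rewrite mulr0 subr0.
Qed.

Lemma blockA_tr (w : 'cV[R]_m) i : A^T *m blockv blk w i = (blockA blk A i)^T *m w.
Proof.
apply/matrixP => j k; rewrite !mxE; apply: eq_bigr => r _; rewrite !mxE.
by rewrite (ord1 k); case: (blk r == i); rewrite ?mulr0 ?mul0r.
Qed.

Lemma sqnormB_upd (u g : 'cV[R]_m) c i :
  sqnormB blk A (u - c *: blockv blk g i) = sqnormB blk A u
   - 2 * c * blocknorm blk A i ^+ 2 * dotv u (blockv blk g i)
   + c ^+ 2 * blocknorm blk A i ^+ 2 * sqnorm2 (blockv blk g i).
Proof.
rewrite /sqnormB (bigD1 i) //= [X in _ = X - _ + _](bigD1 i) //=.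
have -> : \sum_(j | j != i) blocknorm blk A j ^+ 2 *
     sqnorm2 (blockv blk (u - c *: blockv blk g i) j) =
   \sum_(j | j != i) blocknorm blk A j ^+ 2 * sqnorm2 (blockv blk u j).
  apply: eq_bigr => j ji; rewrite blockv_lin blockv_ne 1?eq_sym //.
  by rewrite scaler0 subr0.
rewrite blockv_lin blockv_idem sqnorm2B sqnorm2Z dotvZr.
rewrite dotv_blockv blockv_idem; ring.
Qed.

End Blocks.

Section TupleSum.
Variable R : realType.
Lemma sum_tupleS (T : finType) k (F : seq T -> R) :
  \sum_(t : k.+1.-tuple T) F t = \sum_(x : T) \sum_(t : k.-tuple T) F (x :: t).
Proof.
rewrite pair_big /=.
rewrite (reindex (fun p : T * k.-tuple T => [tuple of p.1 :: p.2])) //=.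
exists (fun t : k.+1.-tuple T => (thead t, [tuple of behead t])) => [[x t] _|t _].
  by congr (_, _); apply: val_inj.
by rewrite [in RHS](tuple_eta t); apply: val_inj.
Qed.
End TupleSum.

Section Theta.
Variable R : realType.
Definition thnext (th : R) := (Num.sqrt (th ^+ 4 + 4 * th ^+ 2) - th ^+ 2) / 2.

Lemma sq_helper (a c : R) : a ^+ 2 = c * c + 4 * c ->
  ((a - c) / 2) ^+ 2 = c * (1 - (a - c) / 2).
Proof.
move=> hq; have -> : ((a - c) / 2) ^+ 2 = (a ^+ 2 - 2 * c * a + c ^+ 2) / 4 by field.
by rewrite hq; field.
Qed.

Lemma thnext_props th : 0 < th ->
  0 < thnext th /\ thnext th < 1 /\ thnext th ^+ 2 = th ^+ 2 * (1 - thnext th).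
Proof.
move=> t0.
have hq0 : 0 <= th ^+ 4 + 4 * th ^+ 2 by rewrite addr_ge0 ?mulr_ge0 ?exprn_ge0 // ltW.
set q := Num.sqrt (th ^+ 4 + 4 * th ^+ 2).
have qq : q ^+ 2 = th ^+ 4 + 4 * th ^+ 2 by rewrite /q sqr_sqrtr.
have q0 : 0 <= q by exact: sqrtr_ge0.
have t2 : 0 < th ^+ 2 by rewrite exprn_gt0.
have e4 : th ^+ 4 = th ^+ 2 * th ^+ 2 by rewrite -exprD.
have qgt : th ^+ 2 < q.
  rewrite -(ltr_pXn2r (n := 2)) ?nnegrE // ?ltW //; rewrite qq e4.
  by rewrite -expr2 ltrDl mulr_gt0.
have E : thnext th ^+ 2 = th ^+ 2 * (1 - thnext th).
  by rewrite /thnext -/q; apply: sq_helper; rewrite qq e4.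
have pos : 0 < thnext th by rewrite /thnext divr_gt0 // subr_gt0.
split => //; split => //.
have : 0 < th ^+ 2 * (1 - thnext th) by rewrite -E exprn_gt0.
rewrite pmulr_rgt0 //; lra.
Qed.

Lemma thnext_inv th : 0 < th <= 1 -> th^-1 + 2^-1 <= (thnext th)^-1.
Proof.
case/andP => t0 t1; have [p0 [p1 E]] := thnext_props t0.
set u := (thnext th)^-1; set w := th^-1.
have w1 : 1 <= w by rewrite /w invf_ge1.
have u0 : 0 < u by rewrite /u invr_gt0.
have hw : w * th = 1 by rewrite /w mulVf // gt_eqF.
have hu : u * thnext th = 1 by rewrite /u mulVf // gt_eqF.
have key : u ^+ 2 - u = w ^+ 2.
  have e0 : (u * w) ^+ 2 * thnext th ^+ 2 = (u * w) ^+ 2 * (th ^+ 2 * (1 - thnext th)) by rewrite E.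
  have e1 : (u * w) ^+ 2 * thnext th ^+ 2 = w ^+ 2.
    have -> : (u * w) ^+ 2 * thnext th ^+ 2 = w ^+ 2 * (u * thnext th) ^+ 2 by ring.
    by rewrite hu expr1n mulr1.
  have e2 : (u * w) ^+ 2 * (th ^+ 2 * (1 - thnext th)) = u ^+ 2 - u.
    have -> : (u * w) ^+ 2 * (th ^+ 2 * (1 - thnext th)) =
      u ^+ 2 * (w * th) ^+ 2 - u * (w * th) ^+ 2 * (u * thnext th) by ring.
    by rewrite hu hw expr1n !mulr1.
  by rewrite -e1 -e2 e0.
rewrite leNgt; apply/negP => h.
have : 0 < (w - u + 2^-1) * (w + u - 2^-1) by rewrite mulr_gt0 //; lra.
have -> : (w - u + 2^-1) * (w + u - 2^-1) = w ^+ 2 - (u ^+ 2 - u) - 4^-1 by field.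
rewrite key; lra.
Qed.
End Theta.

Lemma alg_final (R : realType) (th Pv Ps Py a1 a2 a3 a4 : R) : 0 < th <= 1 ->
  a3 = (1 - th) * a2 + th * a4 -> Pv + a1 - a3 <= Ps -> Pv + a2 - a3 <= Py ->
  th^-2 * (Pv - Ps) - th^-1 * (a4 - a1) <= (1 - th) / th ^+ 2 * (Py - Ps).
Proof.
case/andP => t0 t1 e3 c1 c2.
have h1 : th * (Pv + a1 - a3) <= th * Ps by rewrite ler_pM2l.
have h2 : (1 - th) * (Pv + a2 - a3) <= (1 - th) * Py by apply: ler_wpM2l => //; lra.
have inner : Pv - Ps - th * (a4 - a1) <= (1 - th) * (Py - Ps).
  rewrite e3 in h1 h2; nra.
have t2 : 0 < th ^+ 2 by rewrite exprn_gt0.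
have -> : th^-2 * (Pv - Ps) - th^-1 * (a4 - a1) = th^-2 * (Pv - Ps - th * (a4 - a1)).
  by field; rewrite gt_eqF.
have -> : (1 - th) / th ^+ 2 * (Py - Ps) = th^-2 * ((1 - th) * (Py - Ps)) by ring.
by apply: ler_wpM2l => //; rewrite invr_ge0 ltW.
Qed.

Lemma dotv_sumr (R : realType) n I (r : seq I) (P : pred I) (u : 'cV[R]_n) (w : I -> 'cV[R]_n) :
  dotv u (\sum_(i <- r | P i) w i) = \sum_(i <- r | P i) dotv u (w i).
Proof.
rewrite /dotv exchange_big /=; apply: eq_bigr => j _.
by rewrite summxE mulr_sumr.
Qed.

Section Algo.
Variables (R : realType) (m n M : nat) (A : 'M[R]_(m, n)) (b : 'cV[R]_m)
  (f : 'cV[R]_n -> R) (blk : 'I_m -> 'I_M) (yhat : 'cV[R]_m).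
Hypotheses (hsc : strongly_convex1 f) (hM : (0 < M)%N)
  (hL : forall i, 0 < blocknorm blk A i).

Definition Psi (y : 'cV[R]_m) := fconj f (A^T *m y) - dotv b y.
Definition gr (v : 'cV[R]_m) := A *m grad (fconj f) (A^T *m v) - b.

Lemma Psi_conv u v : Psi v + dotv (gr v) (u - v) <= Psi u.
Proof.
have [_ [_ [c1 _]]] := conj_props hsc (A^T *m v).
have := c1 (A^T *m u); rewrite -mulmxBr dotv_mul /Psi /gr.
rewrite (dotvC (_ - b)) dotvBr (dotvC _ b) dotvBr; lra.
Qed.

Lemma Psi_desc v h : Psi (v + h) <= Psi v + dotv (gr v) h + 2^-1 * sqnorm2 (A^T *m h).
Proof.
have [_ [_ [_ c2]]] := conj_props hsc (A^T *m v).
have := c2 (A^T *m (v + h)); rewrite -mulmxBr (addrC v h) addrK dotv_mul /Psi /gr.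
rewrite (dotvC (_ - b)) dotvBr (dotvC _ b) dotvDr; lra.
Qed.

Definition Phi (s : state R m) :=
  (1 - st_th s) / st_th s ^+ 2 * (Psi (st_y s) - Psi yhat)
  + M%:R ^+ 2 / 2 * sqnormB blk A (st_z s - yhat).

Lemma step_th (s : state R m) i : st_th (arbk_step f blk A b s i) = thnext (st_th s).
Proof. by []. Qed.

Lemma step_bound (s : state R m) : 0 < st_th s <= 1 ->
  \sum_i Phi (arbk_step f blk A b s i) <= M%:R * Phi s.
Proof.
case: s => y z th /= /andP [t0 t1].
have [p0 [p1 E]] := thnext_props t0.
have Mp : 0 < M%:R :> R by rewrite ltr0n.
pose v := (1 - th) *: y + th *: z.
pose g := gr v.
pose Ps := Psi yhat.
pose B0 := sqnormB blk A (z - yhat).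
have wE : (1 - thnext th) / thnext th ^+ 2 = th^-2.
  have hn : thnext th ^+ 2 != 0 by rewrite expf_neq0 // gt_eqF.
  apply: (mulIf hn); rewrite mulfVK // E mulrA mulVf ?mul1r //.
  by rewrite expf_neq0 // gt_eqF.
have per i : Phi (arbk_step f blk A b (St y z th) i) <=
    th^-2 * (Psi v - Ps) + M%:R ^+ 2 / 2 * B0 - M%:R * th^-1 * dotv (z - yhat) (blockv blk g i).
  rewrite /Phi /= wE -/v.
  set G := blockv blk (A *m grad (fconj f) (A^T *m v) - b) i.
  set Li := blocknorm blk A i ^+ 2.
  have Li0 : 0 < Li by rewrite exprn_gt0.
  set c := (M%:R * th)^-1 / Li.
  set q := sqnorm2 G.
  have hGg : dotv g G = q.
    by rewrite /q /sqnorm2 {1}/G dotv_blockv blockv_idem.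
  have yE : v + M%:R * th *: (z - c *: G - z) = v + (- Li^-1) *: G.
    congr (_ + _); rewrite addrC addKr scalerN scalerA /c mulrA mulfV ?mul1r //.
    by rewrite scaleNr.
    by rewrite mulf_neq0 // gt_eqF.
  rewrite yE.
  have hd := Psi_desc v ((- Li^-1) *: G).
  rewrite -/g dotvZr hGg -scalemxAr sqnorm2Z in hd.
  have hAG : sqnorm2 (A^T *m G) <= Li * q.
    by rewrite /G -blockv_idem blockA_tr; apply: opnorm_tr.
  have zE : z - c *: G - yhat = (z - yhat) - c *: G.
    by rewrite addrAC.
  rewrite zE sqnormB_upd -/B0 -/Li -/q.
  set a := dotv (z - yhat) G.
  have q0 : 0 <= q by exact: sqnorm2_ge0.
  have hP : Psi (v + - Li^-1 *: G) <= Psi v - q / (2 * Li).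
    apply: le_trans hd _.
    have : (- Li^-1) ^+ 2 * sqnorm2 (A^T *m G) <= (- Li^-1) ^+ 2 * (Li * q).
      by apply: ler_wpM2l => //; rewrite sqr_ge0.
    have -> : (- Li^-1) ^+ 2 * (Li * q) = q / Li by field; rewrite gt_eqF.
    have -> : q / (2 * Li) = 2^-1 * (q / Li) by field; rewrite gt_eqF.
    have -> : - Li^-1 * q = - (q / Li) by rewrite mulNr mulrC.
    lra.
  have w0 : 0 <= th^-2 by rewrite invr_ge0 exprn_ge0 // ltW.
  have h1 : th^-2 * (Psi (v + - Li^-1 *: G) - Ps) <= th^-2 * (Psi v - q / (2 * Li) - Ps).
    by apply: ler_wpM2l => //; rewrite /Ps; lra.
  apply: le_trans (lerD h1 (lexx _)) _; rewrite le_eqVlt; apply/orP; left; apply/eqP.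
  rewrite /c; field.
  by rewrite gt_eqF // gt_eqF // gt_eqF.
apply: le_trans (ler_sum _ (fun i _ => per i)) _.
rewrite big_split /= sumr_const card_ord sumrN -mulr_sumr -dotv_sumr blockv_sum.
have e3 : dotv g v = (1 - th) * dotv g y + th * dotv g z by rewrite /v dotvDr !dotvZr.
have c1 : Psi v + dotv g yhat - dotv g v <= Ps.
  by have := Psi_conv yhat v; rewrite dotvBr addrA.
have c2 : Psi v + dotv g y - dotv g v <= Psi y.
  by have := Psi_conv y v; rewrite dotvBr addrA.
have key := alg_final (introT andP (conj t0 t1)) e3 c1 c2.
have : M%:R * (th^-2 * (Psi v - Ps) - th^-1 * (dotv g z - dotv g yhat))
   <= M%:R * ((1 - th) / th ^+ 2 * (Psi y - Ps)) by apply: ler_wpM2l => //; exact: ltW.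
rewrite /Phi /= (dotvC (z - yhat)) dotvBr -mulr_natl -/B0 -/Ps.
lra.
Qed.

End Algo.

Section Run.
Variables (R : realType) (m n M : nat) (A : 'M[R]_(m, n)) (b : 'cV[R]_m)
  (f : 'cV[R]_n -> R) (blk : 'I_m -> 'I_M) (yhat : 'cV[R]_m).
Hypotheses (hsc : strongly_convex1 f) (hM : (0 < M)%N)
  (hL : forall i, 0 < blocknorm blk A i).

Local Notation step := (arbk_step f blk A b).
Local Notation Phi := (Phi A b f blk yhat).

Definition runE (s : state R m) k (X : state R m -> R) :=
  (M%:R ^+ k)^-1 * \sum_(t : k.-tuple 'I_M) X (foldl step s t).

Lemma Mpos : 0 < M%:R :> R. Proof. by rewrite ltr0n. Qed.

Lemma run_bound k : forall s, 0 < st_th s <= 1 -> runE s k Phi <= Phi s.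
Proof.
have Mp := Mpos.
have Mk j : M%:R ^+ j != 0 :> R by rewrite expf_neq0 // gt_eqF.
elim: k => [|k IH] s hs.
  rewrite /runE expr0 invr1 mul1r.
  rewrite (eq_bigr (fun _ => Phi s)) => [|t _]; last by rewrite tuple0.
  by rewrite sumr_const card_tuple card_ord expn0 mulr1n.
have E x : \sum_(t : k.-tuple 'I_M) Phi (foldl step s (x :: t)) =
    M%:R ^+ k * runE (step s x) k Phi.
  by rewrite /runE mulrA mulfV ?mul1r.
rewrite /runE (@sum_tupleS _ _ k (fun t => Phi (foldl step s t))) (eq_bigr _ (fun x _ => E x)) -mulr_sumr exprS invfM.
rewrite -mulrA [X in _ * X]mulrA mulVf // mul1r.
have hs' x : 0 < st_th (step s x) <= 1.
  case/andP: hs => h0 _; have [p0 [p1 _]] := thnext_props h0.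
  by rewrite step_th p0 ltW.
apply: le_trans (_ : M%:R^-1 * \sum_x Phi (step s x) <= _).
  by apply: ler_wpM2l; [rewrite invr_ge0 ltW | apply: ler_sum => x _; apply: IH].
have := step_bound b yhat hsc hM hL hs.
by rewrite ler_pdivrMl // => /le_trans; apply; rewrite le_eqVlt eqxx.
Qed.

Lemma th_foldl (t : seq 'I_M) : forall s,
  st_th (foldl step s t) = iter (size t) (@thnext R) (st_th s).
Proof.
elim: t => [|x t IH] s; first by [].
have -> : foldl step s (x :: t) = foldl step (step s x) t by [].
by rewrite IH step_th -iterSr.
Qed.

Lemma theta_bound k : let th := iter k (@thnext R) (M%:R^-1) in
  0 < th <= 1 /\ M%:R + k%:R / 2 <= th^-1.
Proof.
have Mp := Mpos.
elim: k => [|k [IH1 IH2]] /=.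
  rewrite invrK mul0r addr0 lexx invr_gt0 Mp /= invf_le1 //.
  by rewrite ler1n.
case/andP: IH1 => h0 h1.
have [p0 [p1 _]] := thnext_props h0.
rewrite p0 ltW //=.
have := thnext_inv (introT andP (conj h0 h1)).
have : k.+1%:R = k%:R + 1 :> R by rewrite -natr1.
lra.
Qed.

Lemma sqnormB_ge0 (y : 'cV[R]_m) : 0 <= sqnormB blk A y.
Proof. by rewrite /sqnormB sumr_ge0 // => i _; rewrite mulr_ge0 ?sqr_ge0 ?sqnorm2_ge0. Qed.

End Run.

Section Expect.
Variables (R : realType) (M k : nat).
Lemma expect_le (X Y : seq 'I_M -> R) : (forall t : k.-tuple 'I_M, X t <= Y t) ->
  expect_k k X <= expect_k k Y.
Proof.
move=> h; rewrite /expect_k; apply: ler_wpM2l; first by rewrite invr_ge0 exprn_ge0.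
by apply: ler_sum => t _; apply: h.
Qed.
Lemma expect_mulr c (X : seq 'I_M -> R) :
  expect_k k (fun ix => c * X ix) = c * expect_k k X.
Proof. by rewrite /expect_k -mulr_sumr mulrCA. Qed.
Lemma expect_ge0 (X : seq 'I_M -> R) : (forall t : k.-tuple 'I_M, 0 <= X t) -> 0 <= expect_k k X.
Proof.
move=> h; rewrite /expect_k mulr_ge0 ?invr_ge0 ?exprn_ge0 //.
by apply: sumr_ge0 => t _; apply: h.
Qed.
End Expect.

Section Final.
Variables (R : realType) (m n M : nat) (A : 'M[R]_(m, n)) (b : 'cV[R]_m)
  (f : 'cV[R]_n -> R) (blk : 'I_m -> 'I_M) (xhat : 'cV[R]_n) (yhat : 'cV[R]_m).
Hypotheses (hsc : strongly_convex1 f) (hAx : A *m xhat = b)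
  (hmin : forall x : 'cV[R]_n, A *m x = b -> f xhat <= f x)
  (hopt : forall y : 'cV[R]_m,
     fconj f (A^T *m yhat) - dotv b yhat <= fconj f (A^T *m y) - dotv b y).

Lemma Psi_opt : Psi A b f yhat = - f xhat.
Proof.
apply/eqP; rewrite eq_le; apply/andP; split; last first.
  have := fconj_ge hsc (A^T *m yhat) xhat; rewrite dotv_mul hAx /Psi (dotvC b); lra.
pose r := gr A b f yhat.
have hr : r = 0.
  pose s := sqnorm2 r; pose K := sqnorm2 (A^T *m r).
  have K0 : 0 <= K := sqnorm2_ge0 _.
  have s0 : 0 <= s := sqnorm2_ge0 _.
  pose t := - s / (K + 1).
  have h := Psi_desc A b hsc yhat (t *: r).
  have ho := hopt (yhat + t *: r); rewrite -/(Psi A b f _) -/(Psi A b f _) in ho.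
  rewrite dotvZr -/r -scalemxAr sqnorm2Z -/K in h.
  have : 0 <= t * s + 2^-1 * (t ^+ 2 * K) by rewrite /s /sqnorm2; lra.
  have K1 : 0 < K + 1 by lra.
  have -> : t * s + 2^-1 * (t ^+ 2 * K) = - (s ^+ 2 * (K / 2 + 1)) / (K + 1) ^+ 2.
    by rewrite /t; field; rewrite gt_eqF.
  rewrite pmulr_lge0 ?invr_gt0 ?exprn_gt0 // oppr_ge0 => h2.
  have : s ^+ 2 * (K / 2 + 1) = 0.
    by apply/eqP; rewrite eq_le h2 mulr_ge0 ?sqr_ge0 //; lra.
  move/eqP; rewrite mulf_eq0 => /orP [|]; last by move=> /eqP ?; exfalso; lra.
  by rewrite sqrf_eq0 => /eqP /sqnorm2_eq0.
have [hX _] := conj_props hsc (A^T *m yhat).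
set X := grad (fconj f) (A^T *m yhat) in hX.
have hAX : A *m X = b by apply/eqP; rewrite -subr_eq0; apply/eqP; exact: hr.
have := hmin hAX; move: hX; rewrite /gd dotv_mul hAX /Psi (dotvC b); lra.
Qed.

Lemma D_eq y : bregman f (A^T *m y) (grad (fconj f) (A^T *m y)) xhat =
  Psi A b f y - Psi A b f yhat.
Proof.
have [hX _] := conj_props hsc (A^T *m y).
rewrite Psi_opt /bregman dotvBr !dotv_mul hAx; move: hX; rewrite /gd dotv_mul /Psi (dotvC b); lra.
Qed.

End Final.

Lemma blocknorm_pos (R : realType) m n M (A : 'M[R]_(m, n)) (blk : 'I_m -> 'I_M) :
  (forall r : 'I_m, exists j : 'I_n, A r j != 0) -> consecutive_partition blk ->
  forall i, 0 < blocknorm blk A i.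
Proof.
move=> hrow [_ hsurj] i.
have [r hr] := hsurj i; have [j hj] := hrow r.
pose x : 'cV[R]_n := delta_mx j 0.
have hx : norm2 x = 1 by rewrite /norm2 sqnorm2_delta sqrtr1.
have h := opnorm_ge (blockA blk A i) hx.
apply: lt_le_trans h; rewrite /norm2 sqrtr_gt0.
apply: lt_le_trans (coord_le _ r).
have -> : (blockA blk A i *m x) r 0 = A r j.
  rewrite mxE (bigD1 j) //= big1 => [|k kj]; first by rewrite !mxE hr !eqxx mulr1 addr0.
  by rewrite !mxE (negbTE kj) mulr0.
by rewrite lt_def sqrf_eq0 hj sqr_ge0.
Qed.

Unset Implicit Arguments.
Theorem theorem2 (R : realType) (m n M : nat)
  (A : 'M[R]_(m, n)) (b : 'cV[R]_m) (f : 'cV[R]_n -> R)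
  (blk : 'I_m -> 'I_M) (xhat : 'cV[R]_n) (yhat : 'cV[R]_m) :
  (forall r : 'I_m, exists j : 'I_n, A r j != 0) ->
  (exists x : 'cV[R]_n, A *m x = b) ->
  strongly_convex1 f ->
  A *m xhat = b ->
  (forall x : 'cV[R]_n, A *m x = b -> f xhat <= f x) ->
  (forall x : 'cV[R]_n, A *m x = b -> f x = f xhat -> x = xhat) ->
  (0 < M)%N -> consecutive_partition blk ->
  (forall y : 'cV[R]_m,
     fconj f (A^T *m yhat) - dotv b yhat <= fconj f (A^T *m y) - dotv b y) ->
  let d (ix : seq 'I_M) := A^T *m st_y (arbk_state f blk A b ix) in
  let x (ix : seq 'I_M) := grad (fconj f) (d ix) in
  let y0 : 'cV[R]_m := 0 in
  let d0 := A^T *m y0 in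
  let x0 := grad (fconj f) d0 in
  let C0 := (1 - M%:R^-1) * bregman f d0 x0 xhat
            + 2^-1 * sqnormB blk A (y0 - yhat) in
  forall k : nat, (1 <= k)%N ->
    2^-1 * expect_k k (fun ix => sqnorm2 (x ix - xhat))
      <= expect_k k (fun ix => bregman f (d ix) (x ix) xhat)
    /\ expect_k k (fun ix => bregman f (d ix) (x ix) xhat)
      <= 4 * M%:R ^+ 2 / (k%:R - 1 + 2 * M%:R) ^+ 2 * C0.
Proof.
move=> hrow _ hsc hAx hmin _ hM hpart hopt d x y0 d0 x0 C0 k hk.
have hL := blocknorm_pos hrow hpart.
set Ps := Psi A b f yhat.
have hD ix : bregman f (d ix) (x ix) xhat = Psi A b f (st_y (arbk_state f blk A b ix)) - Ps.
  exact: (D_eq hsc hAx hmin hopt).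
have Dge0 ix : 0 <= bregman f (d ix) (x ix) xhat.
  by rewrite hD subr_ge0; exact: hopt.
split.
  rewrite -expect_mulr; apply: expect_le => t.
  have [_ [c4 _]] := conj_props hsc (d t).
  have := c4 xhat; rewrite -/(x t) /bregman.
  have -> : sqnorm2 (x t - xhat) = sqnorm2 (xhat - x t) by rewrite -sqnorm2N opprB.
  lra.
case: k hk => [//|k'] _.
set E := expect_k k'.+1 _.
have E0 : 0 <= E by apply: expect_ge0 => t.
have Mp : 0 < M%:R :> R by rewrite ltr0n.
have [hth1 hth2] := theta_bound R hM k'.
set th := iter k' (@thnext R) M%:R^-1 in hth1 hth2.
case/andP: hth1 => th0 th1.
have [p0 [p1 Eth]] := thnext_props th0.
have akE : (1 - thnext th) / thnext th ^+ 2 = th^-2.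
  have hn : thnext th ^+ 2 != 0 by rewrite expf_neq0 // gt_eqF.
  apply: (mulIf hn); rewrite mulfVK // Eth mulrA mulVf ?mul1r //.
  by rewrite expf_neq0 // gt_eqF.
have hPhi (t : k'.+1.-tuple 'I_M) :
    th^-2 * bregman f (d t) (x t) xhat <= Phi A b f blk yhat (arbk_state f blk A b t).
  rewrite hD /Phi.
  have -> : st_th (arbk_state f blk A b t) = thnext th.
    by rewrite /arbk_state th_foldl size_tuple iterS.
  rewrite akE -/Ps lerDl mulr_ge0 ?sqnormB_ge0 // mulr_ge0 // ?sqr_ge0 //.
have hinit : 0 < st_th (arbk_init R m M) <= 1.
  by rewrite /= invr_gt0 Mp /= invf_le1 // ler1n.
have hrun := run_bound b yhat hsc hM hL k'.+1 hinit.
have h1 : th^-2 * E <= Phi A b f blk yhat (arbk_init R m M).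
  rewrite /E -expect_mulr; apply: le_trans hrun.
  exact: (@expect_le R M k'.+1 (fun ix => th^-2 * bregman f (d ix) (x ix) xhat) (fun ix => Phi A b f blk yhat (arbk_state f blk A b ix)) hPhi).
have hC : Phi A b f blk yhat (arbk_init R m M) = M%:R ^+ 2 * C0.
  rewrite /Phi /C0 /= /y0 /d0 /x0 (D_eq hsc hAx hmin hopt) -/Ps.
  by field; rewrite gt_eqF.
rewrite hC in h1.
have k0 : 0 <= k'%:R / 2 :> R by rewrite divr_ge0.
have Q0 : 0 <= M%:R + k'%:R / 2 :> R by apply: addr_ge0 => //; exact: ltW.
have hQ : (M%:R + k'%:R / 2) ^+ 2 <= th^-2.
  rewrite -exprVn ler_sqr ?nnegrE //; apply: le_trans hth2; exact: Q0.
have Qp : 0 < (M%:R + k'%:R / 2) ^+ 2 :> R.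
  by rewrite exprn_gt0 //; apply: lt_le_trans Mp _; rewrite lerDl.
have h2 : (M%:R + k'%:R / 2) ^+ 2 * E <= M%:R ^+ 2 * C0.
  by apply: le_trans h1; apply: ler_wpM2r.
have -> : 4 * M%:R ^+ 2 / (k'.+1%:R - 1 + 2 * M%:R) ^+ 2 * C0 =
    M%:R ^+ 2 * C0 / (M%:R + k'%:R / 2) ^+ 2.
  have -> : k'.+1%:R - 1 = k'%:R :> R by rewrite -natr1 addrK.
  field.
  by rewrite gt_eqF // ltr_wpDr // mulr_gt0.
by rewrite ler_pdivlMr // mulrC.
Qed.
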